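(* Let $P$ be a weakly ranked poset, $\kappa\in\mathscr{I}(P)$ a $P$-kernel, and $Z=g\kappa f$ its $Z$-function, where $f,g$ are its right and left KLS-functions. Let $P^*$ be the opposite weakly ranked poset. Then $\kappa^*$ is a $P^*$-kernel and $Z^*\in\mathscr{I}(P^* )$ is the $Z$-function associated with $\kappa^*$.
   Context: A weakly ranked poset is a locally finite poset $P$ (all intervals finite) with a weak rank function: integers $r_{xy}$ for $x\le y$ with $r_{xy}>0$ for $x<y$ and $r_{xy}+r_{yz}=r_{xz}$. $I(P)=\prod_{x\le y}\mathbb{Z}[t]$ with components $f_{xy}(t)$ is a ring under convolution $(fg)_{xz}=\sum_{x\le y\le z}f_{xy}g_{yz}$ with identity $\delta$. $\mathscr{I}(P)$ is the subring of $f$ with $\deg f_{xy}\le r_{xy}$; involution $\bar f_{xy}(t)=t^{r_{xy}}f_{xy}(t^{-1})$. $\mathscr{I}_{1/2}(P)$: $f\in\mathscr{I}(P)$ with $f_{xx}=1$ and $\deg f_{xy}<r_{xy}/2$ for $x<y$. A $P$-kernel is $\kappa\in\mathscr{I}(P)$ with $\kappa_{xx}=1$ for all $x$ and $\kappa^{-1}=\bar\kappa$. For a $P$-kernel $\kappa$ there are unique $f,g\in\mathscr{I}_{1/2}(P)$ with $\bar f=\kappa f$, $\bar g=g\kappa$ (right and left KLS-functions); the $Z$-function is $Z:=g\kappa f$. The opposite $P^*$ has $y\le x$ in $P^*$ iff $x\le y$ in $P$, with $r^*_{yx}=r_{xy}$; for $f\in\mathscr{I}(P)$, $f^*\in\mathscr{I}(P^*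 )$ is defined by $f^*_{yx}:=f_{xy}$. *)

(* Defs.v *)
From HB Require Import structures.
From mathcomp Require Import all_boot all_order all_algebra.
Set Implicit Arguments. Unset Strict Implicit. Unset Printing Implicit Defensive.
Import Order.TTheory GRing.Theory Num.Theory.
Local Open Scope ring_scope.

(* A weakly ranked poset.  Local finiteness is witnessed by an explicit
   duplicate-free enumeration [itv x y] of every interval [x,y]. The weak rank
   [rk x y] is only meaningful for x <= y. *)
Record wrposet := WRPoset {
  elt : eqType;
  le : elt -> elt -> bool;
  le_refl : forall x, le x x;
  le_anti : forall x y, le x y -> le y x -> x = y;
  le_trans : forall x y z, le x y -> le y z -> le x z;
  itv : elt -> elt -> seq elt;
  itv_uniq : forall x y, uniq (itv x y);
  mem_itv : forall x y z, (z \in itv x y) = le x z && le z y;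
  rk : elt -> elt -> int;
  rk_pos : forall x y, le x y -> x != y -> 0 < rk x y;
  rk_add : forall x y z, le x y -> le y z -> rk x y + rk y z = rk x z
}.
Arguments le : clear implicits.
Arguments itv : clear implicits.
Arguments rk : clear implicits.

Definition opp (P : wrposet) : wrposet.
Proof.
refine (@WRPoset (elt P) (fun x y => le P y x) (fun x => @le_refl P x)
  (fun x y h1 h2 => @le_anti P x y h2 h1) (fun x y z h1 h2 => @le_trans P z y x h2 h1)
  (fun x y => itv P y x) (fun x y => @itv_uniq P y x) _
  (fun x y => rk P y x) _ _).
- by move=> x y z; rewrite mem_itv andbC.
- by move=> x y h hne; apply: rk_pos => //; rewrite eq_sym.
- by move=> x y z h1 h2; rewrite addrC; apply: rk_add.
Defined.

(* Elements of I(P): families f_{xy}(t) in Z[t]; only x <= y matters. *)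
Definition inc (P : wrposet) := elt P -> elt P -> {poly int}.

Definition eqI (P : wrposet) (f g : inc P) :=
  forall x y, le P x y -> f x y = g x y.

Definition conv (P : wrposet) (f g : inc P) : inc P :=
  fun x z => \sum_(y <- itv P x z) f x y * g y z.

Definition delta (P : wrposet) : inc P :=
  fun x y => if x == y then 1 else 0.
Arguments delta : clear implicits.

Definition inI (P : wrposet) (f : inc P) :=
  forall x y, le P x y -> (size (f x y))%:Z - 1 <= rk P x y.

(* involution: bar f_xy(t) = t^{r_xy} f_xy(t^{-1}) (for deg f_xy <= r_xy) *)
Definition bar (P : wrposet) (f : inc P) : inc P :=
  fun x y => let n := `|rk P x y|%N in \poly_(i < n.+1) (f x y)`_(n - i).

Definition inIhalf (P : wrposet) (f : inc P) :=
  [/\ inI f, (forall x, f x x = 1) &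
      (forall x y, le P x y -> x != y -> 2 * ((size (f x y))%:Z - 1) < rk P x y)].

Definition kernel (P : wrposet) (kappa : inc P) :=
  [/\ inI kappa, (forall x, kappa x x = 1),
      eqI (conv kappa (bar kappa)) (delta P) &
      eqI (conv (bar kappa) kappa) (delta P)].

Definition rightKLS (P : wrposet) (kappa f : inc P) :=
  inIhalf f /\ eqI (bar f) (conv kappa f).
Definition leftKLS (P : wrposet) (kappa g : inc P) :=
  inIhalf g /\ eqI (bar g) (conv g kappa).

Definition Zof (P : wrposet) (kappa f g : inc P) : inc P :=
  conv (conv g kappa) f.

(* Z is THE Z-function of kappa: Z in I(P), it equals g kappa f for some
   right/left KLS-functions f, g of kappa, and for any such pair. *)
Definition is_Zfunction (P : wrposet) (kappa Z : inc P) :=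
  [/\ inI Z,
      (exists f g, [/\ rightKLS kappa f, leftKLS kappa g & eqI Z (Zof kappa f g)]) &
      (forall f g, rightKLS kappa f -> leftKLS kappa g -> eqI Z (Zof kappa f g))].

Definition star (P : wrposet) (f : inc P) : inc (opp P) := fun y x => f x y.

(* Main.v *)
Require Import Defs.
From HB Require Import structures.
From mathcomp Require Import all_boot all_order all_algebra.
From mathcomp Require Import zify ring.
Set Implicit Arguments. Unset Strict Implicit. Unset Printing Implicit Defensive.
Import Order.TTheory GRing.Theory Num.Theory.
Local Open Scope ring_scope.

Lemma star_conv (P : wrposet) (a b : inc P) x y :
  conv (star a) (star b) y x = conv b a x y.
Proof. rewrite /conv /star /=. apply: eq_bigr => z _; exact: mulrC. Qed.

Lemma delta_star (P : wrposet) x y : Defs.delta (Defs.opp P) y x = Defs.delta P x y.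
Proof. by rewrite /Defs.delta eq_sym. Qed.

Lemma kernel_star (P : wrposet) (k : inc P) : kernel k -> kernel (star k).
Proof.
case=> HI H1 H2 H3; split.
- move=> y x h; exact: HI x y h.
- move=> x; exact: H1 x.
- move=> y x h.
  have -> : bar (star k) = star (bar k) by [].
  rewrite star_conv delta_star; exact: H3 x y h.
- move=> y x h.
  have -> : bar (star k) = star (bar k) by [].
  rewrite star_conv delta_star; exact: H2 x y h.
Qed.

Lemma rk_ge0 (P : wrposet) x y : le P x y -> 0 <= rk P x y.
Proof.
move=> h; case: (eqVneq x y) => [<-|ne]; last by apply: ltW; apply: rk_pos.
have := rk_add (Defs.le_refl x) (Defs.le_refl x); lia.
Qed.

Lemma inI_conv (P : wrposet) (a b : inc P) : inI a -> inI b -> inI (conv a b).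
Proof.
move=> Ha Hb x z hxz.
have key : forall (p : {poly int}) (r : int), 0 <= r ->
    ((size p)%:Z - 1 <= r) = (size p <= `|r|.+1)%N.
  move=> p r hr; apply/idP/idP; lia.
rewrite key ?rk_ge0 //.
rewrite /conv big_seq.
apply: (big_ind (fun p : {poly int} => size p <= `|rk P x z|.+1)%N).
- by rewrite size_poly0.
- move=> p q hp hq; apply: leq_trans (size_polyD _ _) _; by rewrite geq_max hp hq.
- move=> y; rewrite mem_itv => /andP[hxy hyz].
  apply: leq_trans (size_polyMleq _ _) _.
  have := Ha _ _ hxy; have := Hb _ _ hyz; rewrite !key ?rk_ge0 // -(rk_add hxy hyz).
  move: (rk_ge0 hxy) (rk_ge0 hyz); lia.
Qed.

Lemma rightKLS_uniq (P : wrposet) (k f1 f2 : inc P) :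
  (forall x, k x x = 1) -> rightKLS k f1 -> rightKLS k f2 -> eqI f1 f2.
Proof.
move=> k1 [[I1 d1 h1] e1] [[I2 d2 h2] e2].
suff H : forall n x y, (size (itv P x y) <= n)%N -> le P x y -> f1 x y = f2 x y.
  by move=> x y; apply: H.
elim=> [|n IH] x y hs hxy.
  have: x \in itv P x y by rewrite mem_itv Defs.le_refl hxy.
  by case: (itv P x y) hs.
case: (eqVneq x y) => [<-|ne]; first by rewrite d1 d2.
have hsum : \sum_(z <- itv P x y | z != x) k x z * f1 z y
          = \sum_(z <- itv P x y | z != x) k x z * f2 z y.
  rewrite big_seq_cond [RHS]big_seq_cond; apply: eq_bigr => z /andP[hz nz].
  move: (hz); rewrite mem_itv => /andP[hxz hzy].
  rewrite (IH z y) //.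
  have hsub : {subset x :: itv P z y <= itv P x y}.
    move=> w; rewrite inE => /orP[/eqP->|]; first by rewrite mem_itv Defs.le_refl hxy.
    rewrite !mem_itv => /andP[hzw hwy]; by rewrite hwy (Defs.le_trans hxz hzw).
  have hu : uniq (x :: itv P z y).
    rewrite /= itv_uniq andbT mem_itv; apply/negP => /andP[hzx _].
    by rewrite (Defs.le_anti hzx hxz) eqxx in nz.
  have := uniq_leq_size hu hsub => /= h; rewrite -ltnS; exact: leq_trans h hs.
have E1 := e1 x y hxy; have E2 := e2 x y hxy.
rewrite /conv (bigD1_seq x) ?itv_uniq ?mem_itv ?Defs.le_refl ?hxy //= k1 mul1r in E1.
rewrite /conv (bigD1_seq x) ?itv_uniq ?mem_itv ?Defs.le_refl ?hxy //= k1 mul1r in E2.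
have E : bar f1 x y - f1 x y = bar f2 x y - f2 x y.
  by rewrite E1 E2 hsum; ring.
apply/polyP => j.
have hr := rk_pos hxy ne.
have H1 := h1 x y hxy ne; have H2 := h2 x y hxy ne.
move: E => /(congr1 (fun p : {poly int} => p`_j)).
rewrite !coefB /bar /= !coef_poly.
set n0 := `|rk P x y|%N.
have hn : rk P x y = n0%:Z by rewrite /n0 gtz0_abs.
rewrite hn in H1 H2.
case: (leqP (maxn (size (f1 x y)) (size (f2 x y))) j) => hj.
  rewrite geq_max in hj; case/andP: hj => hj1 hj2.
  by rewrite !(nth_default 0 hj1) !(nth_default 0 hj2).
have hj0 : (j < n0.+1)%N by lia.
have s1 : (size (f1 x y) <= n0 - j)%N by lia.
have s2 : (size (f2 x y) <= n0 - j)%N by lia.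
rewrite hj0 (nth_default 0 s1) (nth_default 0 s2) !sub0r; exact: oppr_inj.
Qed.

Lemma sum_itv_sub (P : wrposet) x y w (F : elt P -> {poly int}) :
  le P y w -> \sum_(z <- itv P x y) F z = \sum_(z <- itv P x w | le P z y) F z.
Proof.
move=> hyw; rewrite -[RHS]big_filter; apply: perm_big; apply: uniq_perm.
- exact: itv_uniq.
- by rewrite filter_uniq // itv_uniq.
move=> z; rewrite mem_filter !mem_itv; case hzy: (le P z y); rewrite ?andbF //=.
by rewrite (Defs.le_trans hzy hyw) andbT.
Qed.

Lemma sum_itv_sub2 (P : wrposet) x z w (F : elt P -> {poly int}) :
  le P x z -> \sum_(y <- itv P z w) F y = \sum_(y <- itv P x w | le P z y) F y.
Proof.
move=> hxz; rewrite -[RHS]big_filter; apply: perm_big; apply: uniq_perm.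
- exact: itv_uniq.
- by rewrite filter_uniq // itv_uniq.
move=> y; rewrite mem_filter !mem_itv; case hzy: (le P z y); rewrite ?andbF //=.
by rewrite (Defs.le_trans hxz hzy).
Qed.

Lemma conv_assoc (P : wrposet) (a b c : inc P) x w : le P x w ->
  conv (conv a b) c x w = conv a (conv b c) x w.
Proof.
move=> hxw; rewrite /conv.
transitivity (\sum_(y <- itv P x w) \sum_(z <- itv P x w)
   if le P z y then a x z * b z y * c y w else 0).
  rewrite big_seq [RHS]big_seq; apply: eq_bigr => y; rewrite mem_itv => /andP[_ hyw].
  by rewrite big_distrl /= (sum_itv_sub _ _ hyw) big_mkcond.
rewrite exchange_big /= big_seq [RHS]big_seq; apply: eq_bigr => z.
rewrite mem_itv => /andP[hxz _].
rewrite big_distrr /= (sum_itv_sub2 _ _ hxz) [RHS]big_mkcond; apply: eq_bigr => y _.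
by case: ifP; rewrite ?mulrA.
Qed.

Lemma conv_ext (Q : wrposet) (a a' b b' : inc Q) :
  eqI a a' -> eqI b b' -> eqI (conv a b) (conv a' b').
Proof.
move=> ha hb x z h; rewrite /conv big_seq [RHS]big_seq; apply: eq_bigr => y.
by rewrite mem_itv => /andP[h1 h2]; rewrite ha // hb.
Qed.

Lemma Zof_ext (Q : wrposet) (k f1 f2 g1 g2 : inc Q) :
  eqI f1 f2 -> eqI g1 g2 -> eqI (Zof k f1 g1) (Zof k f2 g2).
Proof.
move=> hf hg; apply: conv_ext => //; apply: conv_ext => //.
Qed.

Lemma left_to_right (Q : wrposet) (k g : inc Q) :
  leftKLS k g -> rightKLS (star k) (star g).
Proof.
case=> [[gI g1 gh] ge]; split; first split.
- move=> y x h; exact: gI x y h.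
- move=> x; exact: g1 x.
- move=> y x h ne; apply: (gh x y h); by rewrite eq_sym.
- move=> y x h; rewrite star_conv; exact: ge x y h.
Qed.

Lemma right_to_left (Q : wrposet) (k f : inc Q) :
  rightKLS k f -> leftKLS (star k) (star f).
Proof.
case=> [[fI f1 fh] fe]; split; first split.
- move=> y x h; exact: fI x y h.
- move=> x; exact: f1 x.
- move=> y x h ne; apply: (fh x y h); by rewrite eq_sym.
- move=> y x h; rewrite star_conv; exact: fe x y h.
Qed.

Lemma Zof_star (P : wrposet) (k f g : inc P) :
  eqI (star (Zof k f g)) (Zof (star k) (star g) (star f)).
Proof.
move=> y x h.
have -> : Zof (star k) (star g) (star f) y x
        = \sum_(w <- itv P x y) conv k f w y * g x w.
  rewrite /Zof {1}/conv; apply: eq_bigr => w _; by rewrite star_conv.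
rewrite /star /Zof conv_assoc //= /conv; apply: eq_bigr => w _; exact: mulrC.
Qed.

Theorem proposition2p9 (P : wrposet) (kappa f g : inc P) :
  kernel kappa -> rightKLS kappa f -> leftKLS kappa g ->
  kernel (star kappa) /\ is_Zfunction (star kappa) (star (Zof kappa f g)).
Proof.
move=> hk hf hg.
have hk' := kernel_star hk.
split => //.
have [kI k1 _ _] := hk.
have [[[fI _ _] _] [[gI _ _] _]] := (hf, hg).
split.
- move=> y x h; exact: (inI_conv (inI_conv gI kI) fI) x y h.
- exists (star g), (star f); split.
  + exact: left_to_right hg.
  + exact: right_to_left hf.
  + exact: Zof_star.
- move=> f' g' hf' hg'.
  have e1 : eqI f' (star g) := rightKLS_uniq (k:=star kappa) (fun x => k1 x) hf' (left_to_right hg).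
  have e2' := rightKLS_uniq (k:=star (star kappa)) (fun x => k1 x) (left_to_right hg') (left_to_right (right_to_left hf)).
  have e2 : eqI g' (star f) by move=> y x h; exact: e2' x y h.
  move=> y x h; rewrite (Zof_star kappa f g h).
  symmetry; exact: (Zof_ext (star kappa) e1 e2 h).
Qed.
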